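(* Let $A\in\mathrm{SGL}_n(\mathbb{F}_2)$ and let $\mathbf{x}_1,\ldots,\mathbf{x}_r\in\mathbb{F}_2^n$ be linearly independent, $2\le r\le n$, such that $[\mathbf{x}_i^{\top}A^{-1}\mathbf{x}_j]_{i,j=1}^r$ has rank one and trace zero, and $\mathbf{x}_i^{\top}A^{-1}\mathbf{x}_j=0$ for some $i,j$. (i) For every even $k\in\{2,\ldots,r-1\}$ there exist linearly independent $\mathbf{y}_1,\ldots,\mathbf{y}_r\in\mathbb{F}_2^n$ and a permutation matrix $Q\in GL_r(\mathbb{F}_2)$ such that $\sum_{i=1}^r\mathbf{x}_i\mathbf{x}_i^{\top}=\sum_{i=1}^r\mathbf{y}_i\mathbf{y}_i^{\top}$, $\sum_{i=1}^r\mathbf{x}_i=\sum_{i=1}^r\mathbf{y}_i$, and $[\mathbf{y}_i^{\top}A^{-1}\mathbf{y}_j]_{i,j=1}^r=Q\begin{pmatrix}J_{k\times k}&O\\O&O\end{pmatrix}Q^{\top}$. (ii) If $\sum_{i=1}^r\mathbf{x}_i\mathbf{x}_i^{\top}=\sum_{i=1}^r\mathbf{y}_i\mathbf{y}_i^{\top}$ for some $\mathbf{y}_1,\ldots,\mathbf{y}_r\in\mathbb{F}_2^n$, then $[\mathbf{y}_i^{\top}A^{-1}\mathbf{y}_j]_{i,j=1}^r$ has rank one and trace zero, and $\mathbf{y}_{i'}^{\top}A^{-1}\mathbf{y}_{j'}=0$ for some $i',j'$.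
   Context: $\mathrm{SGL}_n(\mathbb{F}_2)$ is the set of invertible symmetric $n\times n$ matrices over the binary field $\mathbb{F}_2$; $J_{k\times k}$ is the all-ones matrix. *)

(* Defs.v *)
From HB Require Import structures.
From mathcomp Require Import all_boot all_order all_algebra all_fingroup.
Set Implicit Arguments. Unset Strict Implicit. Unset Printing Implicit Defensive.
Import GRing.Theory.
Local Open Scope ring_scope.

Definition gram (F : fieldType) (n r : nat) (M : 'M[F]_n) (x : 'I_r -> 'cV[F]_n)
  : 'M[F]_r := \matrix_(i, j) ((x i)^T *m M *m x j) 0 0.

Definition outer_sum (F : fieldType) (n r : nat) (x : 'I_r -> 'cV[F]_n)
  : 'M[F]_n := \sum_(i < r) x i *m (x i)^T.

Definition Jblock (F : fieldType) (r k : nat) : 'M[F]_r :=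
  \matrix_(i, j) (if (i < k)%N && (j < k)%N then 1 else 0).

Definition lin_indep (F : fieldType) (n r : nat) (x : 'I_r -> 'cV[F]_n) : bool :=
  free [seq x i | i : 'I_r].

(* Main.v *)
Require Import Defs.
From HB Require Import structures.
From mathcomp Require Import all_boot all_order all_algebra all_fingroup.
From mathcomp Require Import zify.
Import GRing.Theory.
Local Open Scope ring_scope.

Module Aux.
Set Implicit Arguments. Unset Strict Implicit.

Section M.
Variable F : fieldType.

Definition Xm {n r} (x : 'I_r -> 'cV[F]_n) : 'M[F]_(r, n) := \matrix_(i, k) x i k 0.

Lemma gramE n r (M : 'M[F]_n) (x : 'I_r -> 'cV[F]_n) :
  gram M x = Xm x *m M *m (Xm x)^T.
Proof.
apply/matrixP => i j; rewrite !mxE; apply: eq_bigr => l _; rewrite !mxE.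
congr (_ * _); apply: eq_bigr => a _; by rewrite !mxE.
Qed.

Lemma outerE n r (x : 'I_r -> 'cV[F]_n) : outer_sum x = (Xm x)^T *m Xm x.
Proof.
apply/matrixP => a b; rewrite /outer_sum summxE !mxE; apply: eq_bigr => i _.
by rewrite !mxE big_ord1 !mxE.
Qed.

Lemma sumE n r (x : 'I_r -> 'cV[F]_n) :
  \sum_(i < r) x i = (const_mx 1 *m Xm x)^T.
Proof.
apply/matrixP => a b; rewrite summxE !mxE; apply: eq_bigr => i _.
by rewrite !mxE mul1r (ord1 b).
Qed.

Lemma XmK n r (M : 'M[F]_(r, n)) : Xm (fun i => (row i M)^T) = M.
Proof. by apply/matrixP => i k; rewrite !mxE. Qed.

Lemma lin_indepE n r (x : 'I_r -> 'cV[F]_n) : lin_indep x = row_free (Xm x).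
Proof.
rewrite /lin_indep.
have -> : [seq x i | i : 'I_r] = map_tuple x (ord_tuple r) :> seq _.
  by rewrite /= -val_ord_tuple.
apply/freeP/idP => H.
  apply: inj_row_free => v Hv; apply/rowP => i; rewrite mxE.
  apply: (H (fun i => v 0 i)).
  apply/matrixP => a b; rewrite summxE !mxE.
  transitivity ((v *m Xm x) 0 a); last by rewrite Hv mxE.
  rewrite !mxE; apply: eq_bigr => l _.
  idtac.
  by rewrite (nth_map l) ?size_tuple // !mxE nth_ord_enum (ord1 b).
move=> k Hk i.
have Hv : (\row_j k j) *m Xm x = 0.
  apply/rowP => a; move/matrixP: Hk => /(_ a 0); rewrite summxE !mxE => Hk.
  transitivity (\sum_(k0 < r) (k k0 *: (map_tuple x (ord_tuple r))`_k0) a 0); last by [].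
  apply: eq_bigr => l _.
  by rewrite (nth_map l) ?size_tuple // !mxE nth_ord_enum.
have := row_free_inj H (A := Xm x) (m := 1) (x1 := \row_j k j) (x2 := 0).
rewrite /= Hv mul0mx => /(_ erefl) /rowP /(_ i); by rewrite !mxE.
Qed.


Lemma ortho_from_outer n r (X Y : 'M[F]_(r,n)) : row_free X ->
  X^T *m X = Y^T *m Y -> exists D : 'M_r, Y = D *m X /\ D^T *m D = 1%:M.
Proof.
move=> fX E.
have rX : \rank X = r by apply/eqP.
have rC : \rank (X^T *m X) = r by rewrite mxrankMfree // mxrank_tr.
have CY : (X^T *m X <= Y)%MS by rewrite E submxMl.
have CX : (X^T *m X <= X)%MS by rewrite submxMl.
have YC : (Y <= X^T *m X)%MS.
  have : (X^T *m X == Y)%MS.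
    rewrite -(mxrank_leqif_eq CY).2 rC eqn_leq rank_leq_row /=.
    by rewrite -{1}rC mxrankS.
  by case/andP.
have /submxP [D ED] : (Y <= X)%MS by apply: submx_trans YC CX.
exists D; split=> //.
have /row_freeP [P XP] := fX.
have e1 : P^T *m (X^T *m X) *m P = (X *m P)^T *m (X *m P) by rewrite trmx_mul !mulmxA.
have e2 : P^T *m (Y^T *m Y) *m P = (X *m P)^T *m (D^T *m D) *m (X *m P).
  by rewrite ED !trmx_mul !mulmxA.
rewrite XP trmx1 ?mul1mx ?mulmx1 in e1 e2.
by rewrite -e2 -E e1.
Qed.

Lemma rank_unitl m n (Q : 'M[F]_m) (M : 'M[F]_(m, n)) :
  Q^T *m Q = 1%:M -> \rank (Q *m M) = \rank M.
Proof.
move=> H; apply/eqP; rewrite eqn_leq mxrankM_maxr /=.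
have -> : M = Q^T *m (Q *m M) by rewrite mulmxA H mul1mx.
rewrite mulmxA H mul1mx. 
by rewrite -{1}[M]mul1mx -H -mulmxA mxrankM_maxr.
Qed.

End M.
Arguments Xm {F n r}.

Lemma F2_cases (a : 'F_2) : a = 0 \/ a = 1.
Proof. case: a => [[|[|//]]] Ha; [left|right]; exact: val_inj. Qed.

Lemma F2_11 : (1 + 1 : 'F_2) = 0. Proof. exact: val_inj. Qed.

Lemma F2_sqr (a : 'F_2) : a * a = a.
Proof. by case: (F2_cases a) => ->; rewrite ?mulr0 ?mulr1. Qed.

Lemma F2_add2 (a : 'F_2) : a + a = 0.
Proof. by case: (F2_cases a) => ->; rewrite ?addr0 ?F2_11. Qed.

Lemma F2_nat (m : nat) : (m%:R : 'F_2) = (odd m)%:R.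
Proof. elim: m => // m IH; rewrite -natr1 IH /=; case: (odd m) => /=;
  by rewrite ?F2_11 ?add0r. Qed.

Lemma F2_eq1 (a : 'F_2) : a = (a == 1)%:R.
Proof. by case: (F2_cases a) => ->; rewrite ?eqxx // eq_sym oner_eq0. Qed.

Lemma sum_lt (r c : nat) : (\sum_(j < r) ((j < c)%N : nat) = minn r c)%N.
Proof.
elim: r => [|r IH]; first by rewrite big_ord0 min0n.
rewrite big_ord_recr /= IH; case: ltnP => H; lia.
Qed.

Lemma count_sum r (P : pred 'I_r) : count P (enum 'I_r) = (\sum_(i < r) (P i : nat))%N.
Proof. by rewrite -sum1_count big_mkcond /= big_enum. Qed.

Lemma ortho_sum r (Q : 'M['F_2]_r) : Q^T *m Q = 1%:M -> (const_mx 1 : 'rV_r) *m Q = const_mx 1.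
Proof.
move=> H; apply/rowP => j; rewrite !mxE.
transitivity ((Q^T *m Q) j j); last by rewrite H mxE eqxx.
rewrite !mxE; apply: eq_bigr => i _; by rewrite !mxE mul1r F2_sqr.
Qed.

Section T.
Variables (n r : nat) (x : 'I_r -> 'cV['F_2]_n) (Q : 'M['F_2]_r).
Hypothesis HQ : Q^T *m Q = 1%:M.
Let y := fun i => (row i (Q *m Xm x))^T.

Lemma T_Xm : Xm y = Q *m Xm x. Proof. exact: XmK. Qed.
Lemma T_indep : lin_indep y = lin_indep x.
Proof. by rewrite !lin_indepE T_Xm /row_free rank_unitl. Qed.
Lemma T_outer : outer_sum y = outer_sum x.
Proof. by rewrite !outerE T_Xm trmx_mul !mulmxA -(mulmxA _ _ Q) HQ mulmx1. Qed.
Lemma T_sum : \sum_(i < r) y i = \sum_(i < r) x i.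
Proof. by rewrite !sumE T_Xm mulmxA ortho_sum. Qed.
Lemma T_gram M : gram M y = Q *m gram M x *m Q^T.
Proof. by rewrite !gramE T_Xm trmx_mul !mulmxA. Qed.
End T.

Lemma rank1_sym r (G : 'M['F_2]_r) : G^T = G -> \rank G = 1%N ->
  forall i j, G i j = G i i * G j j.
Proof.
move=> sG rG.
have [D ED] : exists D : 'M_(r, \rank G), G = D *m row_base G.
  by apply/submxP; rewrite eq_row_base.
have : exists a b : 'I_r -> 'F_2, forall i j, G i j = a i * b j.
  move: D (row_base G) ED; rewrite rG => D R ->.
  exists (fun i => D i 0), (fun j => R 0 j) => i j; by rewrite mxE big_ord1.
case=> a [b Hab] i j.
have Gji : G j i = G i j by rewrite -{1}sG mxE.
by rewrite !Hab mulrACA [b i * _]mulrC -mulrACA -!Hab Gji F2_sqr.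
Qed.
Unset Implicit Arguments.

Lemma sum_one r : (\sum_(j < r) 1 = r)%N.
Proof.
transitivity (minn r r); last by rewrite minnn.
rewrite -sum_lt; apply: eq_bigr => j _; by rewrite ltn_ord.
Qed.

Lemma sum_le r (b : 'I_r -> bool) : (\sum_(j < r) (b j : nat) <= r)%N.
Proof.
apply: (@leq_trans (\sum_(j < r) 1)%N); last by rewrite sum_one.
apply: leq_sum => j _; by case: (b j). Qed.

Lemma sum_neg r (b : 'I_r -> bool) :
  (\sum_(j < r) ((~~ b j) : nat) = r - \sum_(j < r) (b j : nat))%N.
Proof.
have : (\sum_(j < r) (b j : nat) + \sum_(j < r) ((~~ b j) : nat) = r)%N.
  rewrite -big_split /=; transitivity (\sum_(j < r) 1)%N; last exact: sum_one.
  apply: eq_bigr => j _; by case: (b j).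
lia.
Qed.

Lemma sum_pred r (a : pred bool) (c : 'I_r -> bool) :
  (\sum_(j < r) (a (c j) : nat) =
   if a true then (if a false then r else \sum_(j < r) (c j : nat))
   else (if a false then r - \sum_(j < r) (c j : nat) else 0))%N.
Proof.
case Ht: (a true); case Hf: (a false).
- transitivity (\sum_(j < r) 1)%N; last exact: sum_one.
  apply: eq_bigr => j _; by case: (c j); rewrite ?Ht ?Hf.
- apply: eq_bigr => j _; by case: (c j); rewrite ?Ht ?Hf.
- rewrite -sum_neg; apply: eq_bigr => j _; by case: (c j); rewrite ?Ht ?Hf.
- by rewrite big1 // => j _; case: (c j); rewrite ?Ht ?Hf.
Qed.

Lemma perm_bool r (b : 'I_r -> bool) :
  exists p : 'S_r, forall i, b i = (p i < \sum_(j < r) (b j : nat))%N.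
Proof.
set w := (\sum_(j < r) (b j : nat))%N.
have Hw : (w <= r)%N := sum_le _ b.
pose t := [tuple b i | i < r].
pose s := [tuple (i < w)%N | i < r].
have : perm_eq s t.
  apply/seq.permP => a.
  rewrite /s /t /= !count_map -!enumT !count_sum /=.

  rewrite (sum_pred _ a (fun i : 'I_r => (i < w)%N)) (sum_pred _ a b) sum_lt.
  by rewrite (minn_idPr Hw).
case/tuple_permP => p Hp.
have {}Hp : s = [tuple tnth t (p i) | i < r] by apply: val_inj.
exists (p^-1)%g => i.
have := congr1 (fun u => tnth u ((p^-1)%g i)) Hp.
by rewrite /= !tnth_mktuple permKV.
Qed.

Lemma comb r (b : 'I_r -> bool) (k : nat) :
  ~~ odd (\sum_(j < r) (b j : nat)) -> (0 < \sum_(j < r) (b j : nat))%N ->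
  (\sum_(j < r) (b j : nat) < r)%N ->
  ~~ odd k -> (2 <= k)%N -> (k < r)%N ->
  exists s : 'S_r,
    (\sum_(i < r) ((s i < k)%N : nat) = k)%N /\
    odd (\sum_(i < r) (((s i < k)%N && b i) : nat)).
Proof.
set w := (\sum_(j < r) (b j : nat))%N => ew w0 wr ek k2 kr.
have [p Hp] := perm_bool r b; rewrite -/w in Hp.
set m := minn k w; set M := maxn k w.
have ha : (m.-1 < r)%N by rewrite /m; lia.
have hb : (M < r)%N by rewrite /M; lia.
pose q := tperm (Ordinal ha) (Ordinal hb).
exists (p * q)%g; split.
  transitivity (\sum_(j < r) ((j < k)%N : nat)); last first.
    by rewrite sum_lt; apply/minn_idPr/ltnW.
  by rewrite [RHS](reindex_inj (@perm_inj _ (p * q)%g)).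
have claim : forall j : 'I_r, ((q j < k)%N && (j < w)%N) = (j < m.-1)%N.
  move=> j; rewrite /q; case: tpermP => [-> | -> | Ha Hb] /=.
  - rewrite /m /M; apply/idP/idP; [move/andP=> [? ?] | move=> ?; apply/andP; split]; lia.
  - rewrite /m /M; apply/idP/idP; [move/andP=> [? ?] | move=> ?; apply/andP; split]; lia.
  - have Ha' : nat_of_ord j <> m.-1 by move=> E; apply: Ha; apply: val_inj.
    move: Ha'; rewrite /m => Ha'.
    apply/idP/idP; [move/andP=> [? ?] | move=> ?; apply/andP; split]; lia.
have -> : (\sum_(i < r) ((((p * q)%g i < k)%N && b i) : nat) =
          \sum_(j < r) ((j < m.-1)%N : nat))%N.
  rewrite [RHS](reindex_inj (@perm_inj _ p)); apply: eq_bigr => i _.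
  by rewrite permM Hp claim.
rewrite sum_lt (minn_idPr (ltnW ha)).
have Hm : (0 < m)%N by rewrite /m; lia.
have : ~~ odd (minn k w).
  by case: (leqP k w).
rewrite -/m; by rewrite -(prednK Hm) /= negbK.
Qed.

Lemma mat_add2 m n (M : 'M['F_2]_(m,n)) : M + M = 0.
Proof. by apply/matrixP => i j; rewrite !mxE F2_add2. Qed.

Lemma const1E r : (const_mx 1 : 'M['F_2]_r) = (const_mx 1 : 'cV_r) *m (const_mx 1 : 'rV_r).
Proof. by apply/matrixP => i j; rewrite !mxE big_ord1 !mxE mulr1. Qed.

Lemma partii n r (A : 'M['F_2]_n) (x y : 'I_r -> 'cV['F_2]_n) :
  A^T = A -> lin_indep x -> (exists i j, gram (invmx A) x i j = 0) ->
  outer_sum x = outer_sum y ->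
  [/\ \rank (gram (invmx A) y) = \rank (gram (invmx A) x),
      \tr (gram (invmx A) y) = \tr (gram (invmx A) x) &
      exists i j, gram (invmx A) y i j = 0].
Proof.
move=> sA li [i0 [j0 H0]] E.
rewrite !outerE in E; rewrite lin_indepE in li.
have [D [ED HD]] := ortho_from_outer li E.
move: H0; set G := gram (invmx A) x => H0.
have Gy : gram (invmx A) y = D *m G *m D^T by rewrite /G !gramE ED trmx_mul !mulmxA.
have DDt : D *m D^T = 1%:M := mulmx1C HD.
have [uDt uD] := mulmx1_unit HD.
rewrite Gy; split.
- rewrite mxrankMfree; last by rewrite row_free_unit.
  exact: rank_unitl.
- by rewrite mxtrace_mulC mulmxA HD mul1mx.
case: (pickP (fun ij : 'I_r * 'I_r => (D *m G *m D^T) ij.1 ij.2 == 0)) => [[i j] /eqP Hij | Hn].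
  by exists i, j.
exfalso.
have J1 : D *m G *m D^T = const_mx 1.
  apply/matrixP => i j; rewrite [RHS]mxE; have := Hn (i, j).
  by case: (F2_cases ((D *m G *m D^T) i j)) => -> //=; rewrite eqxx.
have EG : G = D^T *m (D *m G *m D^T) *m D.
  by rewrite !mulmxA HD mul1mx -mulmxA HD mulmx1.
have Dt1 : D^T *m (const_mx 1 : 'cV_r) = const_mx 1.
  have -> : (const_mx 1 : 'cV['F_2]_r) = (const_mx 1 : 'rV_r)^T by rewrite trmx_const.
  by rewrite -trmx_mul ortho_sum.
rewrite J1 const1E mulmxA Dt1 -mulmxA ortho_sum // -const1E in EG.
by move: H0; rewrite EG mxE => /eqP; rewrite oner_eq0.
Qed.

Lemma parti n r (A : 'M['F_2]_n) (x : 'I_r -> 'cV['F_2]_n) (k : nat) :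
  A^T = A -> lin_indep x ->
  \rank (gram (invmx A) x) = 1%N -> \tr (gram (invmx A) x) = 0 ->
  (exists i j, gram (invmx A) x i j = 0) ->
  ~~ odd k -> (2 <= k)%N -> (k <= r.-1)%N ->
  exists (y : 'I_r -> 'cV['F_2]_n) (s : 'S_r),
       [/\ lin_indep y,
           outer_sum x = outer_sum y,
           \sum_(i < r) x i = \sum_(i < r) y i &
           gram (invmx A) y = perm_mx s *m Jblock _ r k *m (perm_mx s)^T].
Proof.
move=> sA li; set G := gram (invmx A) x => rG trG [i0 [j0 H0]] ek k2 kr1.
have sG : G^T = G by rewrite /G gramE !trmx_mul trmxK trmx_inv sA !mulmxA.
have Hg := rank1_sym sG rG.
pose b i := G i i == 1.
have Gb : forall i, G i i = (b i)%:R := fun i => F2_eq1 _.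
set w := (\sum_(j < r) (b j : nat))%N.
have sumb : \sum_(j < r) ((b j)%:R : 'F_2) = w%:R by rewrite natr_sum.
have ew : ~~ odd w.
  move: trG; rewrite /mxtrace (eq_bigr _ (fun i _ => Gb i)) sumb F2_nat.
  by case: (odd w) => //= /eqP; rewrite oner_eq0.
have w0 : (0 < w)%N.
  case: (posnP w) => // /eqP; rewrite sum_nat_eq0 => /forallP Hb.
  have bF : forall i, b i = false by move=> i; have := Hb i; case: (b i).
  have G0 : G = 0 by apply/matrixP => i j; rewrite Hg !Gb !bF mxE mul0r.
  by move: rG; rewrite G0 mxrank0.
have [i1 bi1] : exists i1, b i1 = false.
  move: H0; rewrite Hg => /eqP; rewrite mulf_eq0 => /orP [] /eqP H.
  + by exists i0; rewrite /b H eq_sym oner_eq0.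
  + by exists j0; rewrite /b H eq_sym oner_eq0.
have wr : (w < r)%N.
  have : (0 < \sum_(j < r) ((~~ b j) : nat))%N by rewrite (bigD1 i1) //= bi1.
  rewrite sum_neg -/w; have := sum_le r b; rewrite -/w; lia.
have kr : (k < r)%N by lia.
have [s [Hs1 Hs2]] := comb r b k ew w0 wr ek k2 kr.
pose v : 'cV['F_2]_r := \col_i (b i)%:R.
pose u : 'cV['F_2]_r := \col_i ((s i < k)%N)%:R.
have [c cEq] : {c : 'cV['F_2]_r | c = v + u} by exists (v + u).
have cE : forall l, c l 0 = (b l)%:R + ((s l < k)%N)%:R by move=> l; rewrite cEq !mxE.
pose Q : 'M['F_2]_r := 1%:M + c *m c^T.
have sumu : \sum_(l < r) (((s l < k)%N)%:R : 'F_2) = k%:R by rewrite -natr_sum Hs1.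
have ctc : c^T *m c = 0.
  apply/matrixP => i j; rewrite (ord1 i) (ord1 j) !mxE.
  under eq_bigr => l _ do rewrite mxE F2_sqr cE.
  rewrite big_split /= sumb sumu (F2_nat w) (F2_nat k).
  by rewrite (negbTE ew) (negbTE ek) addr0.
have ctv : c^T *m v = 1%:M.
  apply/matrixP => i j; rewrite (ord1 i) (ord1 j) !mxE.
  under eq_bigr => l _ do rewrite mxE cE mxE mulrDl F2_sqr -natrM mulnb.
  rewrite big_split /= sumb -natr_sum [X in _ + X]F2_nat Hs2 (F2_nat w).
  by rewrite (negbTE ew) add0r.
have CC : c *m c^T *m (c *m c^T) = 0.
  by rewrite mulmxA -(mulmxA c) ctc mulmx0 mul0mx.
have HQ : Q^T *m Q = 1%:M.
  have Qt : Q^T = Q.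
    by apply/matrixP => i j; rewrite !mxE !big_ord1 !mxE eq_sym mulrC.
  rewrite Qt /Q mulmxDl !mul1mx mulmxDr mulmx1 CC addr0.
  by rewrite -addrA mat_add2 addr0.
pose y := fun i => (row i (Q *m Xm x))^T.
exists y, s; split.
- by rewrite (T_indep x HQ).
- by rewrite (T_outer x HQ).
- by rewrite (T_sum x HQ).
rewrite (T_gram x Q (invmx A)) -/G.
have EG : G = v *m v^T.
  by apply/matrixP => i j; rewrite Hg !Gb !mxE big_ord1 !mxE.
have Qv : Q *m v = u.
  by rewrite /Q mulmxDl mul1mx -mulmxA ctv mulmx1 cEq addrA mat_add2 add0r.
rewrite EG mulmxA -[Q *m v *m v^T *m Q^T]mulmxA -trmx_mul Qv.
rewrite -row_permE tr_perm_mx -col_permE.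
apply/matrixP => i j; rewrite !mxE big_ord1 !mxE.
by case: (s i < k)%N; case: (s j < k)%N; rewrite /= ?mulr1 ?mul0r ?mulr0.
Qed.
End Aux.
Import Aux.

Theorem lemma4p9 (n r : nat) (A : 'M['F_2]_n) (x : 'I_r -> 'cV['F_2]_n) :
  A^T = A -> A \in unitmx ->
  lin_indep x -> (2 <= r)%N -> (r <= n)%N ->
  \rank (gram (invmx A) x) = 1%N -> \tr (gram (invmx A) x) = 0 ->
  (exists i j, gram (invmx A) x i j = 0) ->
  (forall k : nat, ~~ odd k -> (2 <= k)%N -> (k <= r.-1)%N ->
     exists (y : 'I_r -> 'cV['F_2]_n) (s : 'S_r),
       [/\ lin_indep y,
           outer_sum x = outer_sum y,
           \sum_(i < r) x i = \sum_(i < r) y i &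
           gram (invmx A) y = perm_mx s *m Jblock _ r k *m (perm_mx s)^T])
  /\
  (forall y : 'I_r -> 'cV['F_2]_n, outer_sum x = outer_sum y ->
     [/\ \rank (gram (invmx A) y) = 1%N, \tr (gram (invmx A) y) = 0 &
         exists i j, gram (invmx A) y i j = 0]).
Proof.
move=> sA uA li r2 rn rG trG hz; split.
  move=> k ek k2 kr; exact: (parti _ _ _ _ _ sA li rG trG hz ek k2 kr).
move=> y E; have [r1 t1 z1] := partii _ _ _ _ _ sA li hz E.
by rewrite r1 t1.
Qed.
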